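(* Let $X$ be a Hausdorff topological space. Then $X$ is locally compact if and only if its symmetric pseudogroup $\mathscr{I}(X)$ is continuous.
   Context: The symmetric pseudogroup $\mathscr{I}(X)$ is the set of all homeomorphisms $f:U\to V$ between open subsets $U=\mathrm{dom}(f)$ and $V$ of $X$, with product: for $f:U\to V$ and $f_1:U_1\to V_1$, $f_1\cdot f : x\mapsto f_1(f(x))$ defined on $f^{-1}(V\cap U_1)$ with values in $f_1(V\cap U_1)$; it is an inverse semigroup with $f^*=f^{-1}$. Its intrinsic order is $f\leqslant g$ iff $f=g|_U$ for some open $U\subseteq\mathrm{dom}(g)$. In a poset, $x$ is way-below $y$ ($x\ll y$) if for every directed subset $D$ (nonempty, any two elements having an upper bound in $D$) that has a supremum with $y\leqslant\sup D$, there is $d\in D$ with $x\leqslant d$. A poset is continuous if for every $s$ the set $\{t: t\ll s\}$ is directed with supremum $s$; $\mathscr{I}(X)$ is continuous if it is so for its intrinsic order. *)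

(* Defs.v *)
From HB Require Import structures.
From mathcomp Require Import all_boot all_order.
From mathcomp Require Import all_classical all_reals all_analysis.
Set Implicit Arguments. Unset Strict Implicit. Unset Printing Implicit Defensive.
Local Open Scope classical_set_scope.

(* An element of the symmetric pseudogroup I(X): a homeomorphism f : U -> V
   between open subsets U = pdom f and V = f @` U of X.  It is represented by a
   total map X -> X; to get a canonical representative we require f x = x
   outside U (this field carries no mathematical content). *)
Record phomeo (X : topologicalType) := PHomeo {
  pdom : set X;
  pmap : X -> X;
  pinv : X -> X;
  pdom_open : open pdom;
  pimg_open : open (pmap @` pdom);
  pinvK : forall x, pdom x -> pinv (pmap x) = x;
  pmapK : forall y, (pmap @` pdom) y -> pmap (pinv y) = y;
  pinv_img : forall y, (pmap @` pdom) y -> pdom (pinv y);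
  pmap_cont : {within pdom, continuous pmap};
  pinv_cont : {within pmap @` pdom, continuous pinv};
  pmap_out : forall x, ~ pdom x -> pmap x = x
}.

(* intrinsic order: f <= g iff f = g|_U for some open U ⊆ dom g,
   i.e. (since dom f is open) dom f ⊆ dom g and f, g agree on dom f *)
Definition ple (X : topologicalType) (f g : phomeo X) : Prop :=
  pdom f `<=` pdom g /\ forall x, pdom f x -> pmap f x = pmap g x.

Section Poset.
Variables (T : Type) (le : T -> T -> Prop).

Definition directed (D : set T) : Prop :=
  (exists d, D d) /\
  forall a b, D a -> D b -> exists2 c, D c & le a c /\ le b c.

Definition is_sup (D : set T) (s : T) : Prop :=
  (forall d, D d -> le d s) /\
  (forall u, (forall d, D d -> le d u) -> le s u).

Definition way_below (x y : T) : Prop :=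
  forall D s, directed D -> is_sup D s -> le y s ->
  exists2 d, D d & le x d.

Definition continuous_poset : Prop :=
  forall s, directed [set t | way_below t s] /\
            is_sup [set t | way_below t s] s.
End Poset.

(* Main.v *)
From Pilot Require Import Defs.
From HB Require Import structures.
From mathcomp Require Import all_boot all_order.
From mathcomp Require Import all_classical all_reals all_analysis.
Set Implicit Arguments. Unset Strict Implicit. Unset Printing Implicit Defensive.
Local Open Scope classical_set_scope.

Notation pm := Pilot.Defs.pmap.
Notation pv := Pilot.Defs.pinv.
Notation pvK := Pilot.Defs.pinvK.
Section Res.
Context {X : topologicalType}.
Implicit Types (s t : phomeo X).

Lemma ple_refl s : ple s s. Proof. by split. Qed.
Lemma ple_trans (a b c : phomeo X) : ple a b -> ple b c -> ple a c.
Proof.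
move=> [ab eab] [bc ebc]; split=> [x /ab /bc//|x ax].
by rewrite eab // ebc //; apply: ab.
Qed.

Definition resmap s (A : set X) x :=
  if pselect ((pdom s `&` A) x) then pm s x else x.
Definition resinv s (A : set X) y :=
  if pselect ((pm s @` (pdom s `&` A)) y) then pv s y else y.

Lemma resmapE s A x : (pdom s `&` A) x -> resmap s A x = pm s x.
Proof. by rewrite /resmap; case: pselect. Qed.
Lemma resinvE s A y : (pm s @` (pdom s `&` A)) y -> resinv s A y = pv s y.
Proof. by rewrite /resinv; case: pselect. Qed.

Lemma res_img s A : resmap s A @` (pdom s `&` A) = pm s @` (pdom s `&` A).
Proof.
rewrite eqEsubset; split=> y [x Dx <-]; exists x => //; by rewrite resmapE.
Qed.

Lemma res_dom_open s A : open A -> open (pdom s `&` A).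
Proof. by move=> oA; apply: openI => //; exact: pdom_open. Qed.

Lemma res_img_open s A : open A -> open (resmap s A @` (pdom s `&` A)).
Proof.
move=> oA; rewrite res_img.
have := @pinv_cont _ s; rewrite continuous_open_subspace; last exact: (@pimg_open _ s).
move/(continuous_inP _ (@pimg_open _ s)) => /(_ _ (res_dom_open s oA)).
suff -> : pm s @` (pdom s `&` A) = (pm s @` pdom s) `&` pv s @^-1` (pdom s `&` A) by [].
rewrite eqEsubset; split.
- move=> y [x Dx <-]; split; first by exists x => //; case: Dx.
  by rewrite /= (@pvK _ s) //; case: Dx.
- move=> y [ys Dy]; exists (pv s y) => //; exact: pmapK.
Qed.

Lemma res_pinvK s A x : (pdom s `&` A) x -> resinv s A (resmap s A x) = x.
Proof.
move=> Dx; rewrite resmapE // resinvE; last by exists x.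
by apply: pvK; case: Dx.
Qed.

Lemma res_pmapK s A y : (resmap s A @` (pdom s `&` A)) y -> resmap s A (resinv s A y) = y.
Proof.
rewrite res_img => -[x Dx <-]; rewrite resinvE; last by exists x.
rewrite pvK; last by case: Dx.
by rewrite resmapE.
Qed.

Lemma res_pinv_img s A y : (resmap s A @` (pdom s `&` A)) y -> (pdom s `&` A) (resinv s A y).
Proof.
rewrite res_img => -[x Dx <-]; rewrite resinvE; last by exists x.
by rewrite pvK //; case: Dx.
Qed.

Lemma res_pmap_cont s A : {within pdom s `&` A, continuous resmap s A}.
Proof.
apply: (@subspace_eq_continuous _ _ _ (pm s)).
  by move=> x; rewrite inE => Dx; rewrite /from_subspace resmapE.
apply: (continuous_subspaceW _ (@pmap_cont _ s)); exact: subIsetl.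
Qed.

Lemma res_pinv_cont s A : {within resmap s A @` (pdom s `&` A), continuous resinv s A}.
Proof.
rewrite res_img.
apply: (@subspace_eq_continuous _ _ _ (pv s)).
  by move=> x; rewrite inE => Dx; rewrite /from_subspace resinvE.
apply: (continuous_subspaceW _ (@pinv_cont _ s)).
by move=> y [x [Dx _] <-]; exists x.
Qed.

Lemma res_out s A x : ~ (pdom s `&` A) x -> resmap s A x = x.
Proof. by rewrite /resmap; case: pselect. Qed.

Definition res s A (oA : open A) : phomeo X :=
  @PHomeo X (pdom s `&` A) (resmap s A) (resinv s A) (res_dom_open s oA)
    (res_img_open s oA) (@res_pinvK s A) (@res_pmapK s A) (@res_pinv_img s A)
    (@res_pmap_cont s A) (@res_pinv_cont s A) (@res_out s A).

Lemma res_ple s A (oA : open A) : ple (res s oA) s.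
Proof. split; first exact: subIsetl. by move=> x Dx /=; rewrite resmapE. Qed.

Lemma res_map s A (oA : open A) x : (pdom s `&` A) x -> pm (res s oA) x = pm s x.
Proof. exact: resmapE. Qed.

Lemma idX_img : (@id X) @` setT = setT.
Proof. by rewrite eqEsubset; split=> y // _; exists y. Qed.

Definition idX : phomeo X.
refine (@PHomeo X setT id id openT _ (fun _ _ => erefl) (fun _ _ => erefl)
  (fun _ _ => I) _ _ (fun x (h : ~ setT x) => False_ind _ (h I))).
- by rewrite idX_img; exact: openT.
- by apply: continuous_subspaceT => x; exact: cvg_id.
- by apply: continuous_subspaceT => x; exact: cvg_id.
Defined.

Lemma resmap_id A x : resmap idX A x = x.
Proof. by rewrite /resmap; case: pselect. Qed.

End Res.

Section WB.
Context {X : topologicalType}.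
Implicit Types (s t u : phomeo X).
Local Notation le := (@ple X).

Lemma compact_dir (K : set X) (W : set (set X)) : compact K ->
  (exists w, W w) -> (forall a b, W a -> W b -> exists2 c, W c & a `|` b `<=` c) ->
  (forall w, W w -> open w) ->
  K `<=` \bigcup_(w in W) w -> exists2 w, W w & K `<=` w.
Proof.
move=> cK [w0 Ww0] dir oW cov.
pose F := filter_from W (fun a => [set c | W c /\ a `<=` c]).
have FF : Filter F.
  apply: filter_from_filter; first by exists w0.
  move=> a b Wa Wb; have [c Wc abc] := dir a b Wa Wb.
  exists c => // d [Wd cd]; split; split=> // x ?; apply/cd/abc; by [left|right].
have := (proj1 (compact_near_coveringP K) cK) (set X) F (fun w x => w x) FF.
case.
- move=> x Kx; have [w Ww wx] := cov x Kx.
  exists (w, [set c | W c /\ w `<=` c]) => /=.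
  + split; first by apply: open_nbhs_nbhs; split => //; exact: oW.
    by exists w.
  + by move=> [x' c] /= [wx' [_ wc]]; exact: wc.
- move=> a Wa aS; exists a => //; apply: aS; split => //.
Qed.


Lemma sup_dom D s : directed le D -> is_sup le D s ->
  pdom s `<=` \bigcup_(d in D) pdom d.
Proof.
move=> _ [ub least].
have oW : open (\bigcup_(d in D) pdom d).
  by apply: bigcup_open => d _; exact: pdom_open.
have : le s (res s oW).
  apply: least => d Dd; have [ds eds] := ub d Dd; split.
    by move=> x dx; split; [exact: ds | exists d].
  by move=> x dx; rewrite res_map ?eds //; split; [exact: ds|exists d].
by move=> [+ _] x sx => /(_ x sx) [].
Qed.

Lemma wb_of_compact t s (K : set X) : le t s -> compact K ->
  pdom t `<=` K -> K `<=` pdom s -> way_below le t s.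
Proof.
move=> [ts ets] cK tK Ks D s' dirD supD [ss' ess'].
have sd := sup_dom dirD supD.
have [w [d Dd ->] Kd] : exists2 w, (fun w => exists2 d, D d & w = pdom d) w & K `<=` w.
  apply: compact_dir => //.
  - by case: (dirD) => -[d Dd] _; exists (pdom d); exists d.
  - move=> _ _ [a Da ->] [b Db ->].
    have [c Dc [[ac _] [bc _]]] := (proj2 dirD) a b Da Db.
    exists (pdom c); first by exists c.
    by move=> x [/ac|/bc].
  - by move=> _ [d _ ->]; exact: pdom_open.
  - move=> x /Ks /ss' /sd [d Dd dx]; exists (pdom d) => //; by exists d.
exists d => //; split; first by move=> x /tK /Kd.
move=> x tx; have dx := Kd _ (tK _ tx).
have [ds' eds'] := (proj1 supD) d Dd.
rewrite ets // ess'; [exact/esym/eds'|exact: ts].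
Qed.

Lemma wb_le t s : way_below le t s -> le t s.
Proof.
move=> wb.
have dirS : directed le [set s].
  split; first by exists s.
  by move=> a b -> ->; exists s => //; split; apply: ple_refl.
have supS : is_sup le [set s] s.
  split; first by move=> d ->; apply: ple_refl.
  by move=> u; apply.
by have [d -> //] := wb [set s] s dirS supS (ple_refl s).
Qed.

Lemma wb_res_id t (U : set X) (oU : open U) : way_below le t (res idX oU) ->
  forall W : set (set X), (exists w, W w) ->
  (forall a b, W a -> W b -> exists2 c, W c & a `|` b `<=` c) ->
  (forall w, W w -> open w) -> U `<=` \bigcup_(w in W) w ->
  exists2 w, W w & pdom t `<=` w.
Proof.
move=> wb W [w0 Ww0] dir oW cov.
have oWU w : W w -> open (w `&` U) by move=> Ww; apply: openI => //; exact: oW.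
pose D := [set d | exists w (Ww : W w), d = res idX (oWU w Ww)].
have dirD : directed le D.
  split; first by exists (res idX (oWU w0 Ww0)); exists w0, Ww0.
  move=> _ _ [a [Wa ->]] [b [Wb ->]]; have [c Wc abc] := dir a b Wa Wb.
  exists (res idX (oWU c Wc)); first by exists c, Wc.
  split; split.
  - by move=> x /= [_ [ax Ux]]; split=> //; split=> //; apply: abc; left.
  - by move=> x /= _; rewrite !resmap_id.
  - by move=> x /= [_ [ax Ux]]; split=> //; split=> //; apply: abc; right.
  - by move=> x /= _; rewrite !resmap_id.
have supD : is_sup le D (res idX oU).
  split.
    move=> _ [w [Ww ->]]; split; first by move=> x /= [_ [_ Ux]].
    by move=> x _ /=; rewrite !resmap_id.
  move=> u ub; split.
    move=> x [_ Ux]; have [w Ww wx] := cov x Ux.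
    have [+ _] := ub _ (ex_intro _ w (ex_intro _ Ww erefl)).
    by apply.
  move=> x [_ Ux]; have [w Ww wx] := cov x Ux.
  have [_ e] := ub _ (ex_intro _ w (ex_intro _ Ww erefl)).
  rewrite -e /=; first by rewrite !resmap_id.
  by split=> //; split.
have [_ [w [Ww ->]] [td _]] := wb D _ dirD supD (ple_refl _).
by exists w => // x /td [_ []].
Qed.

Lemma lc_reg (hX : hausdorff_space X) (lc : locally_compact [set: X])
  (O : set X) x : open O -> O x ->
  exists A K, [/\ open A, A x, compact K, A `<=` K & K `<=` O].
Proof.
move=> oO Ox.
have [B] := lc x I; rewrite withinET => Bx [cB clB].
have reg := compact_regular hX cB Bx.
have [N Nx cNO] := reg O (open_nbhs_nbhs (conj oO Ox)).
exists (interior (N `&` B)), (closure (N `&` B)); split.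
- exact: open_interior.
- exact: filterI.
- apply: (subclosed_compact _ cB); first exact: closed_closure.
  rewrite [X in _ `<=` X](closure_id B).1 //; apply: closureS; exact: subIsetr.
- by move=> y /interior_subset; exact: subset_closure.
- by apply: subset_trans cNO; apply: closureS; exact: subIsetl.
Qed.

End WB.

Unset Implicit Arguments.
Theorem corollary5p11 (X : topologicalType) (HX : hausdorff_space X) :
  locally_compact [set: X] <-> continuous_poset (@ple X).
Proof.
split.
- move=> lc s.
  have wbK : forall t, way_below (@ple X) t s ->
      exists K, [/\ compact K, pdom t `<=` K & K `<=` pdom s].
    move=> t wb.
    pose D := [set d | exists A (oA : open A),
      (exists K, [/\ compact K, A `<=` K & K `<=` pdom s]) /\ d = res s oA].
    have dirD : directed (@ple X) D.
      split.
        exists (res s open0); exists set0, open0; split => //.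
        by exists set0; split => //; exact: compact0.
      move=> _ _ [A1 [oA1 [[K1 [cK1 A1K1 K1s]] ->]]] [A2 [oA2 [[K2 [cK2 A2K2 K2s]] ->]]].
      exists (res s (openU oA1 oA2)).
        exists (A1 `|` A2), (openU oA1 oA2); split => //.
        exists (K1 `|` K2); split; first exact: compactU.
          by move=> x [/A1K1|/A2K2] ?; [left|right].
        by move=> x [/K1s|/K2s].
      split; split.
      + by move=> x [sx A1x]; split => //; left.
      + by move=> x [sx A1x]; rewrite /= !resmapE //; split => //; left.
      + by move=> x [sx A2x]; split => //; right.
      + by move=> x [sx A2x]; rewrite /= !resmapE //; split => //; right.
    have supD : is_sup (@ple X) D s.
      split; first by move=> _ [A [oA [_ ->]]]; exact: res_ple.
      move=> u ub; split.
        move=> x sx; have [A [K [oA Ax cK AK Ks]]] := lc_reg HX lc (pdom_open s) sx.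
        have [+ _] := ub (res s oA) (ex_intro _ A (ex_intro _ oA (conj (ex_intro _ K (And3 cK AK Ks)) erefl))).
        by apply.
      move=> x sx; have [A [K [oA Ax cK AK Ks]]] := lc_reg HX lc (pdom_open s) sx.
      have [_ e] := ub (res s oA) (ex_intro _ A (ex_intro _ oA (conj (ex_intro _ K (And3 cK AK Ks)) erefl))).
      by rewrite -e //= resmapE.
    have [_ [A [oA [[K [cK AK Ks] ->]]]] [td _]] := wb D s dirD supD (ple_refl s).
    by exists K; split => // x /td [_ /AK].
  split.
  + split.
      exists (res s open0); apply: (@wb_of_compact _ _ _ set0).
      * exact: res_ple.
      * exact: compact0.
      * by move=> x [].
      * by [].
    move=> t1 t2 wb1 wb2.
    have [K1 [cK1 t1K1 K1s]] := wbK t1 wb1.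
    have [K2 [cK2 t2K2 K2s]] := wbK t2 wb2.
    have [t1s et1] := wb_le wb1.
    have [t2s et2] := wb_le wb2.
    exists (res s (openU (pdom_open t1) (pdom_open t2))).
      apply: (@wb_of_compact _ _ _ (K1 `|` K2)).
      * exact: res_ple.
      * exact: compactU.
      * by move=> x [_ [/t1K1|/t2K2]] ?; [left|right].
      * by move=> x [/K1s|/K2s].
    split; split.
    * by move=> x t1x; split; [exact: t1s|left].
    * by move=> x t1x; rewrite /= resmapE ?et1 //; split; [exact: t1s|left].
    * by move=> x t2x; split; [exact: t2s|right].
    * by move=> x t2x; rewrite /= resmapE ?et2 //; split; [exact: t2s|right].
  + split; first by move=> t /wb_le.
    move=> u ub.
    have key : forall x, pdom s x -> exists t, way_below (@ple X) t s /\ pdom t x.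
      move=> x sx; have [A [K [oA Ax cK AK Ks]]] := lc_reg HX lc (pdom_open s) sx.
      exists (res s oA); split => //.
      apply: (@wb_of_compact _ _ _ K) => //; first exact: res_ple.
      by move=> y [_ /AK].
    split.
      by move=> x /key [t [wbt tx]]; have [+ _] := ub t wbt; apply.
    move=> x /key [t [wbt tx]]; have [ts ets] := wb_le wbt.
    have [_ e] := ub t wbt; by rewrite -ets // e.
- move=> cont x _; rewrite withinET.
  have wbx : forall (U : set X) (oU : open U), U x ->
      exists2 t, way_below (@ple X) t (res idX oU) & pdom t x.
    move=> U oU Ux; have [dir sup] := cont (res idX oU).
    have := sup_dom dir sup; move=> /(_ x (conj I Ux)) [t wbt tx].
    by exists t.
  have [t0 wb0 t0x] := wbx _ openT I.
  have [t1 wb1 t1x] := wbx _ (pdom_open t0) t0x.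
  set U := pdom t0; set V := pdom t1.
  have clVU : closure V `<=` U.
    move=> z clz; apply: contrapT => Uz.
    pose W := [set w : set X | open w /\ exists B, [/\ open B, B z & w `&` B = set0]].
    have [w [ow [B [oB Bz wB]]] Vw] : exists2 w, W w & V `<=` w.
      apply: (wb_res_id wb1).
    - exists set0; split; first exact: open0.
      by exists setT; split => //; [exact: openT | rewrite set0I].
    - move=> a b [oa [Ba [oBa Baz aBa]]] [ob [Bb [oBb Bbz bBb]]].
      exists (a `|` b) => //; split; first exact: openU.
      exists (Ba `&` Bb); split; [exact: openI | by split |].
      apply/seteqP; split=> // y [[ay|by'] [Bay Bby]];
        [rewrite -aBa | rewrite -bBb]; by split.
    - by move=> w [].
    - move=> u Uu; have uz : u != z by apply/eqP => uz; apply: Uz; rewrite -uz.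
      have [[P Q] [/= /set_mem Pu /set_mem Qz] [oP oQ /eqP PQ]] := (eq_ind _ id HX _ (@open_hausdorff X)) u z uz.
      exists P => //; split => //; exists Q; split => //.
    have [y [Vy By]] := clz B (open_nbhs_nbhs (conj oB Bz)).
    have : (w `&` B) y by split => //; exact: Vw.
    by rewrite wB.
  have cV : compact (closure V).
    apply/compact_near_coveringP => I F P FF cov.
    pose W := [set w : set X | open w /\
      \forall i \near F, forall y, w y -> closure V y -> P i y].
    have [w [ow nw] Uw] : exists2 w, W w & U `<=` w.
      apply: (wb_res_id wb0).
      - exists (~` closure V); split; first exact/closed_openC/closed_closure.
        by apply: filterE => i y ncl cl.
      - move=> a b [oa na] [ob nb]; exists (a `|` b) => //; split; first exact: openU.
        near=> i => y [ay|by'] cly; [exact: (near na i) | exact: (near nb i)].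
      - by move=> w [].
      - move=> y _; case: (pselect (closure V y)) => [cly|ncly].
        + have := cov y cly.
          case=> -[N S] /= [Ny FS] NS.
          exists (interior N); [split; [exact: open_interior|] | exact: Ny].
          apply: filterS FS => i Si y' /interior_subset Ny' _; exact: (NS (y', i)).
        + exists (~` closure V) => //; split; first exact/closed_openC/closed_closure.
          by apply: filterE => i y' ncl cl.
    apply: filterS nw => i h y cly; apply: h => //; apply: Uw; exact: clVU.
  exists (closure V); last by split => //; exact: closed_closure.
  apply: filterS (@subset_closure _ V) _; apply: open_nbhs_nbhs; split.
    exact: pdom_open.
  exact: t1x.
Unshelve. all: by end_near.
Qed.
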